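(* Let $\mathcal{H}$ and $\mathcal{K}$ be finite-dimensional complex Hilbert spaces with $\dim\mathcal{H}\ge 2$. Let $\mathcal{HP}$ be the set of all Hermitian-preserving trace-preserving linear maps $B(\mathcal{H})\to B(\mathcal{K})$, and $\mathcal{SP},\mathcal{SN}\subseteq\mathcal{HP}$ the subsets of SP and SN maps. Then $\operatorname{Conv}(\mathcal{SP})=\operatorname{Conv}(\mathcal{SN})=\mathcal{HP}$, where $\operatorname{Conv}$ denotes the convex hull.
   Context: $B(\mathcal{H})$ denotes all linear operators on $\mathcal{H}$; a density matrix is a positive semidefinite operator of trace one. A map is Hermitian-preserving if $\Psi(X^\dagger)=\Psi(X)^\dagger$ and trace-preserving if $\operatorname{Tr}\Psi(X)=\operatorname{Tr}X$. An HPTP map $\Psi$ is SP if there is an invertible density matrix $\rho\in B(\mathcal{H})$ such that $\Psi(\rho)$ is an invertible density matrix; it is SN if there is a density matrix $\rho$ such that $\Psi(\rho)$ is a density matrix. *)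

(* Defs.v *)
From HB Require Import structures.
From mathcomp Require Import all_boot all_order all_algebra.
From mathcomp Require Import complex.
From mathcomp Require Import reals.
Set Implicit Arguments. Unset Strict Implicit. Unset Printing Implicit Defensive.
Import Order.TTheory GRing.Theory Num.Theory.
Local Open Scope ring_scope.

(* B(C^n) is modelled by 'M[R[i]]_n, R : realType (the real numbers),
   R[i] the complex numbers. *)
Section QDefs.
Variable R : realType.
Local Notation C := R[i].

Definition adjmx (n : nat) (X : 'M[C]_n) : 'M[C]_n := (map_mx Num.conj X)^T.

Definition hermitian_mx (n : nat) (A : 'M[C]_n) : Prop := adjmx A = A.

Definition psd_mx (n : nat) (A : 'M[C]_n) : Prop :=
  hermitian_mx A /\
  forall v : 'cV[C]_n, 0 <= ((map_mx Num.conj v)^T *m A *m v) 0 0.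

Definition density_mx (n : nat) (A : 'M[C]_n) : Prop :=
  psd_mx A /\ \tr A = 1.

Definition HPTP (n m : nat) (Psi : 'M[C]_n -> 'M[C]_m) : Prop :=
  (forall (a : C) (X Y : 'M[C]_n), Psi (a *: X + Y) = a *: Psi X + Psi Y) /\
  (forall X, Psi (adjmx X) = adjmx (Psi X)) /\
  (forall X, \tr (Psi X) = \tr X).

Definition SP_map (n m : nat) (Psi : 'M[C]_n -> 'M[C]_m) : Prop :=
  HPTP Psi /\
  exists rho : 'M[C]_n, [/\ density_mx rho, rho \in unitmx,
                           density_mx (Psi rho) & Psi rho \in unitmx].

Definition SN_map (n m : nat) (Psi : 'M[C]_n -> 'M[C]_m) : Prop :=
  HPTP Psi /\
  exists rho : 'M[C]_n, density_mx rho /\ density_mx (Psi rho).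

Definition conv_hull (n m : nat) (S : ('M[C]_n -> 'M[C]_m) -> Prop)
  (Phi : 'M[C]_n -> 'M[C]_m) : Prop :=
  exists (k : nat) (w : 'I_k -> R) (Psi : 'I_k -> 'M[C]_n -> 'M[C]_m),
    [/\ forall j, 0 <= w j, \sum_j w j = 1, forall j, S (Psi j) &
        Phi = (fun X => \sum_j ((w j)%:C)%C *: Psi j X)].
End QDefs.

(* Main.v *)
Require Import Defs.
From HB Require Import structures.
From mathcomp Require Import all_boot all_order all_algebra.
From mathcomp Require Import complex reals.
From Stdlib Require Import FunctionalExtensionality.
From mathcomp Require Import ring lra.
Set Implicit Arguments. Unset Strict Implicit. Unset Printing Implicit Defensive.
Import Order.TTheory GRing.Theory Num.Theory.
Local Open Scope ring_scope.

Section Helpers.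
Variable R : realType.
Local Notation C := R[i].

Lemma adjmxE n (A : 'M[C]_n) i j : adjmx A i j = (A j i)^*.
Proof. by rewrite /adjmx !mxE. Qed.

Lemma adjmxD n (A B : 'M[C]_n) : adjmx (A + B) = adjmx A + adjmx B.
Proof. by apply/matrixP=> i j; rewrite !adjmxE !mxE rmorphD. Qed.

Lemma adjmx0 n : adjmx (0 : 'M[C]_n) = 0.
Proof. by apply/matrixP=> i j; rewrite adjmxE !mxE rmorph0. Qed.

Lemma adjmxZ n a (A : 'M[C]_n) : adjmx (a *: A) = a^* *: adjmx A.
Proof. by apply/matrixP=> i j; rewrite !adjmxE !mxE rmorphM. Qed.

Lemma adjmxN n (A : 'M[C]_n) : adjmx (- A) = - adjmx A.
Proof. by apply/matrixP=> i j; rewrite !adjmxE !mxE rmorphN. Qed.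

Lemma adjmx_sum n k (F : 'I_k -> 'M[C]_n) :
  adjmx (\sum_j F j) = \sum_j adjmx (F j).
Proof. exact: (big_morph _ (@adjmxD n) (@adjmx0 n)). Qed.

Lemma tr_adjmx n (A : 'M[C]_n) : \tr (adjmx A) = (\tr A)^*.
Proof. by rewrite /mxtrace rmorph_sum; apply: eq_bigr => i _; rewrite adjmxE. Qed.

Lemma conjRC (r : R) : ((r%:C)%C)^* = (r%:C)%C :> C.
Proof. by apply: conj_Creal; apply/complex_realP; exists r. Qed.

Lemma density_diag k (d : 'rV[C]_k) :
  (forall i, 0 < d 0 i) -> \sum_i d 0 i = 1 ->
  density_mx (diag_mx d) /\ diag_mx d \in unitmx.
Proof.
move=> pos s1; split; last first.
  by rewrite unitmxE det_diag unitfE; apply/prodf_neq0 => i _; rewrite lt0r_neq0.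
split; last by rewrite mxtrace_diag.
split.
  apply/matrixP=> i j; rewrite adjmxE !mxE.
  case: (eqVneq i j) => [->|ne]; first by rewrite !mulr1n conj_Creal // gtr0_real.
  by rewrite !mulr0n rmorph0.
move=> v; rewrite mul_mx_diag mxE; apply: sumr_ge0 => j _; rewrite !mxE.
rewrite mulrAC; apply: mulr_ge0; last exact: ltW.
by rewrite mulrC mul_conjC_ge0.
Qed.


Section Maps.
Variables (n m : nat).
Definition linF (F : 'M[C]_n -> 'M[C]_m) := forall a X Y, F (a *: X + Y) = a *: F X + F Y.
Definition hpF (F : 'M[C]_n -> 'M[C]_m) := forall X, F (adjmx X) = adjmx (F X).
Definition taF (F : 'M[C]_n -> 'M[C]_m) := forall X, \tr (F X) = 0.
Definition linf (f : 'M[C]_n -> C) := forall a X Y, f (a *: X + Y) = a * f X + f Y.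
Definition hpf (f : 'M[C]_n -> C) := forall X, f (adjmx X) = (f X)^*.

Lemma rank1_ok f K : linf f -> hpf f -> adjmx K = K -> \tr K = 0 ->
  [/\ linF (fun X => f X *: K), hpF (fun X => f X *: K) & taF (fun X => f X *: K)].
Proof.
move=> lf hf hK tK; split.
- by move=> a X Y; rewrite lf scalerDl scalerA.
- by move=> X; rewrite hf adjmxZ hK.
- by move=> X; rewrite mxtraceZ tK mulr0.
Qed.

Lemma add_ok F G : [/\ linF F, hpF F & taF F] -> [/\ linF G, hpF G & taF G] ->
  [/\ linF (fun X => F X + G X), hpF (fun X => F X + G X) & taF (fun X => F X + G X)].
Proof.
move=> [lF hF tF] [lG hG tG]; split.
- by move=> a X Y; rewrite lF lG scalerDr addrACA.
- by move=> X; rewrite hF hG adjmxD.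
- by move=> X; rewrite mxtraceD tF tG addr0.
Qed.

Lemma HPTP_addL P L : HPTP P -> [/\ linF L, hpF L & taF L] ->
  HPTP (fun X => P X + L X) /\ HPTP (fun X => P X - L X).
Proof.
move=> [lP [hP tP]] [lL hL tL]; split; split.
- by move=> a X Y; rewrite lP lL scalerDr addrACA.
- split; first by move=> X; rewrite hP hL adjmxD.
  by move=> X; rewrite mxtraceD tL addr0 tP.
- by move=> a X Y; rewrite lP lL scalerDr opprD addrACA scalerN.
- split; first by move=> X; rewrite hP hL adjmxD adjmxN.
  by move=> X; rewrite mxtraceD linearN /= tL oppr0 addr0 tP.
Qed.

Lemma conv_HPTP (S : ('M[C]_n -> 'M[C]_m) -> Prop) Phi :
  (forall P, S P -> HPTP P) -> conv_hull S Phi -> HPTP Phi.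
Proof.
move=> SH [k [w [Psi [w0 w1 SPsi ->]]]]; split; [|split].
- move=> a X Y; rewrite scaler_sumr -big_split; apply: eq_bigr => j _.
  by have [l _] := SH _ (SPsi j); rewrite l scalerDr !scalerA mulrC.
- move=> X; rewrite adjmx_sum; apply: eq_bigr => j _.
  by have [_ [h _]] := SH _ (SPsi j); rewrite h adjmxZ conjRC.
- move=> X; rewrite linear_sum /=.
  under eq_bigr => j _ do rewrite mxtraceZ (SH _ (SPsi j)).2.2.
  by rewrite -mulr_suml -rmorph_sum w1 rmorph1 mul1r.
Qed.
End Maps.


Lemma sumc_const k (a : C) : \sum_(i < k) a = k%:R * a.
Proof. by rewrite sumr_const card_ord mulr_natl. Qed.

Lemma const_density k : density_mx (diag_mx (const_mx ((k.+1)%:R^-1)) : 'M[C]_k.+1)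
   /\ (diag_mx (const_mx ((k.+1)%:R^-1)) : 'M[C]_k.+1) \in unitmx.
Proof.
apply: (@density_diag k.+1) => [i|]; rewrite ?mxE ?invr_gt0 ?ltr0n //.
under eq_bigr => i _ do rewrite mxE.
by rewrite sumc_const mulfV // pnatr_eq0.
Qed.

Lemma main n' m' (Phi : 'M[C]_n'.+2 -> 'M[C]_m'.+1) : HPTP Phi -> conv_hull (@SP_map R _ _) Phi.
Proof.
move=> HP; have [lP [hP tP]] := HP.
pose c : C := (n'.+3)%:R.
have c0 : c != 0 by rewrite pnatr_eq0.
pose Im : 'M[C]_m'.+1 := diag_mx (const_mx ((m'.+1)%:R^-1)).
pose rho1 : 'M[C]_n'.+2 := diag_mx (const_mx ((n'.+2)%:R^-1)).
pose rho2 : 'M[C]_n'.+2 := diag_mx (\row_i ((1 + (i == ord0)%:R) / c)).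
have [dIm uIm] : density_mx Im /\ Im \in unitmx by exact: const_density.
have [dr1 ur1] : density_mx rho1 /\ rho1 \in unitmx by exact: const_density.
have [dr2 ur2] : density_mx rho2 /\ rho2 \in unitmx.
  apply: density_diag => [i|].
    rewrite mxE divr_gt0 ?ltr0n //; case: (i == ord0) => /=; rewrite ?addr0 ?ltr01 //.
    by rewrite addr_gt0 ?ltr01.
  under eq_bigr => i _ do rewrite mxE.
  rewrite -mulr_suml big_split /= sumc_const mulr1 (bigD1 ord0) //=. rewrite big1 ?addr0; last by move=> i /negbTE ->.
    by rewrite natr1 mulfV.
pose dd (X : 'M[C]_n'.+2) := X ord0 ord0 - X ord_max ord_max.
pose f1 X := \tr X - c * dd X.
pose f2 X := - (c * dd X).
have ldd : linf dd by move=> a X Y; rewrite /dd !mxE; ring.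
have hdd : hpf dd by move=> X; rewrite /dd !adjmxE rmorphB.
have cc : c^* = c by rewrite rmorph_nat.
have lf1 : linf f1 by move=> a X Y; rewrite /f1 ldd mxtraceD mxtraceZ; ring.
have hf1 : hpf f1 by move=> X; rewrite /f1 tr_adjmx hdd -{1}cc -rmorphM -rmorphB.
have lf2 : linf f2 by move=> a X Y; rewrite /f2 ldd; ring.
have hf2 : hpf f2 by move=> X; rewrite /f2 hdd -{1}cc -rmorphM -rmorphN.
pose K1 := Im - Phi rho1.
pose K2 := Im - Phi rho2.
have hK1 : adjmx K1 = K1 by rewrite /K1 adjmxD adjmxN -hP dr1.1.1 dIm.1.1.
have hK2 : adjmx K2 = K2 by rewrite /K2 adjmxD adjmxN -hP dr2.1.1 dIm.1.1.
have tK1 : \tr K1 = 0 by rewrite /K1 mxtraceD linearN /= tP dr1.2 dIm.2 subrr.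
have tK2 : \tr K2 = 0 by rewrite /K2 mxtraceD linearN /= tP dr2.2 dIm.2 subrr.
pose L X := f1 X *: K1 + f2 X *: K2.
have HL : [/\ linF L, hpF L & taF L].
  by apply: add_ok; apply: rank1_ok.
have [HA HB] := HPTP_addL HP HL.
have dd1 : dd rho1 = 0 by rewrite /dd !mxE !eqxx subrr.
have dd2 : dd rho2 = c^-1 by rewrite /dd !mxE !eqxx /=; ring.
have subK : forall x y : 'M[C]_m'.+1, x + (y - x) = y by move=> x y; rewrite addrC subrK.
have A1 : Phi rho1 + L rho1 = Im.
  by rewrite /L /f1 /f2 dd1 mulr0 oppr0 addr0 dr1.2 scale1r scale0r addr0 subK.
have B2 : Phi rho2 - L rho2 = Im.
  rewrite /L /f1 /f2 dd2 mulfV // dr2.2 subrr scale0r add0r scaleN1r opprK subK //.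
exists 2, (fun _ => 1/2), (fun j : 'I_2 => if j == ord0 then (fun X => Phi X + L X)
                                          else (fun X => Phi X - L X)).
split.
- by move=> j; rewrite divr_ge0 ?ler01 ?ler0n.
- by rewrite big_ord_recl big_ord1; lra.
- case=> [[|[|j]] Hj] //=.
  + by split=> //; exists rho1; split; rewrite ?A1.
  + by split=> //; exists rho2; split; rewrite ?B2.
- apply: functional_extensionality => X.
  rewrite big_ord_recl big_ord1 /=.
  rewrite scalerDr scalerBr addrACA subrr addr0 -scalerDl -rmorphD.
  have -> : (1/2 + 1/2 : R) = 1 by lra.
  by rewrite rmorph1 scale1r.
Qed.

End Helpers.

Theorem proposition3 (R : realType) (n m : nat) (hn : (2 <= n)%N) :
  (forall Phi : 'M[R[i]]_n -> 'M[R[i]]_m,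
     conv_hull (@SP_map R n m) Phi <-> HPTP Phi) /\
  (forall Phi : 'M[R[i]]_n -> 'M[R[i]]_m,
     conv_hull (@SN_map R n m) Phi <-> HPTP Phi).
Proof.
have key : forall Phi : 'M[R[i]]_n -> 'M[R[i]]_m, HPTP Phi -> conv_hull (@SP_map R n m) Phi.
  case: n hn => [|[|n']] // _; case: m => [|m'] Phi HP; last exact: main.
  exfalso; have := HP.2.2 1; rewrite mxtrace1 /mxtrace big_ord0 => /eqP.
  by rewrite eq_sym pnatr_eq0.
split => Phi; split.
- by apply: conv_HPTP => P [].
- exact: key.
- by apply: conv_HPTP => P [].
- move=> /key [k [w [Psi [w0 w1 H ->]]]]; exists k, w, Psi; split => // j.
  have [h [rho [d _ d' _]]] := H j; split => //; by exists rho.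
Qed.
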